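(* Let $f$ be a $p$-minimal newform such that $\pi_p$ is a ramified principal series representation, so that $\pi_p\cong\pi(\mu_1,\mu_2)$ with $\mu_1$ unramified and $\omega_p:=\mu_1\mu_2$ of conductor exponent $N_p\ge1$. Then: (i) for $p\ge5$: $a(\mathrm{sym}^3(\pi_p))=3N_p$ if $N_p>1$ or if $N_p=1$ and $\omega_p|_{\mathbb{Z}_p^\times}$ has order $>3$; otherwise $a(\mathrm{sym}^3(\pi_p))=3N_p-1$; (ii) for $p=3$: $a(\mathrm{sym}^3(\pi_3))=2N_3$ if $N_3=2$ and $\omega_3|_{\mathbb{Z}_3^\times}$ has order $3$; otherwise $a(\mathrm{sym}^3(\pi_3))=3N_3-1$; (iii) for $p=2$: $a(\mathrm{sym}^3(\pi_2))=3N_2-1$ if $N_2>3$, and $=2N_2$ otherwise.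
   Context: $f\in S_k(N,\epsilon)$ newform with local component $\pi_p$ at $p$; $N=p^{N_p}N'$, $p\nmid N'$. $p$-minimal: the $p$-part of the level is minimal among all twists of $f$ by Dirichlet characters. The $L$-parameter of $\pi(\mu_1,\mu_2)$ is $\mu_1\oplus\mu_2$ with zero monodromy. $\mathrm{sym}^3(\pi_p)$ is the representation of $\mathrm{GL}_4(\mathbb{Q}_p)$ with $L$-parameter the third symmetric power of that of $\pi_p$; $a(\cdot)$ is the conductor exponent. Conductor exponent of a character $\chi$ of $\mathbb{Q}_p^\times$: $0$ if $\chi|_{\mathbb{Z}_p^\times}=1$, otherwise the least $n\ge1$ with $\chi|_{1+p^n\mathbb{Z}_p}=1$. *)

(* Defs.v *)
From Stdlib Require Import ClassicalEpsilon.
From mathcomp Require Import all_boot all_order all_algebra all_field.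

Set Implicit Arguments.
Unset Strict Implicit.
Unset Printing Implicit Defensive.

Import Order.TTheory GRing.Theory Num.Theory.
Local Open Scope ring_scope.

(* A (smooth) character of Z_p^x is modelled by its values on the dense subset
   of natural numbers prime to p (extended by 0 on multiples of p): a
   completely multiplicative function nat -> algC, periodic modulo some p^n,
   vanishing exactly on multiples of p (i.e. a Dirichlet character of
   p-power modulus).  Continuous characters Z_p^x -> C^x are exactly these. *)
Definition is_char_Zpx (p : nat) (chi : nat -> algC) : Prop :=
  [/\ exists n : nat, forall a : nat, chi (a + p ^ n)%N = chi a,
      forall a : nat, (chi a == 0) = (p %| a)%N
    & forall a b : nat, chi (a * b)%N = chi a * chi b].

(* A character of Q_p^x = p^Z x Z_p^x : its restriction to Z_p^x and its
   value at the uniformizer p. *)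
Record qpchar := QpChar { qres : nat -> algC; qatp : algC }.

Definition valid_qpchar (p : nat) (mu : qpchar) : Prop :=
  is_char_Zpx p (qres mu) /\ qatp mu != 0.

Definition qmul (mu nu : qpchar) : qpchar :=
  QpChar (fun a => qres mu a * qres nu a) (qatp mu * qatp nu).

(* chi is trivial on 1 + p^n Z_p (for n = 0: on all of Z_p^x). *)
Definition trivial_on (p : nat) (chi : nat -> algC) (n : nat) : Prop :=
  forall a : nat, coprime a p -> a = 1 %[mod p ^ n] -> chi a = 1.

Definition cond_exp (p : nat) (mu : qpchar) : nat :=
  epsilon (inhabits 0%N)
    (fun n => trivial_on p (qres mu) n /\
              forall m, trivial_on p (qres mu) m -> (n <= m)%N).

Definition unramified (p : nat) (mu : qpchar) : Prop :=
  trivial_on p (qres mu) 0.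

Definition res_order (p : nat) (mu : qpchar) : nat :=
  epsilon (inhabits 0%N)
    (fun k => (0 < k)%N /\
       (forall a, coprime a p -> qres mu a ^+ k = 1) /\
       forall m, (0 < m)%N -> (forall a, coprime a p -> qres mu a ^+ m = 1) ->
         (k <= m)%N).

(* A Weil-Deligne representation with zero monodromy which is a direct sum of
   characters is modelled by the list of these characters; its conductor
   exponent is the sum of the conductor exponents. *)
Definition wd_cond (p : nat) (phi : seq qpchar) : nat :=
  sumn [seq cond_exp p mu | mu <- phi].

Definition Lparam_ps (mu1 mu2 : qpchar) : seq qpchar := [:: mu1; mu2].

Definition sym3 (mu1 mu2 : qpchar) : seq qpchar :=
  [:: qmul mu1 (qmul mu1 mu1); qmul (qmul mu1 mu1) mu2;
      qmul mu1 (qmul mu2 mu2); qmul mu2 (qmul mu2 mu2)].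

Definition ps_cond (p : nat) (mu1 mu2 : qpchar) : nat :=
  wd_cond p (Lparam_ps mu1 mu2).

(* p-minimality of pi(mu1,mu2): its conductor is minimal among all twists
   pi(mu1,mu2) (x) chi = pi(mu1 chi, mu2 chi). *)
Definition p_minimal (p : nat) (mu1 mu2 : qpchar) : Prop :=
  forall chi : qpchar, valid_qpchar p chi ->
    (ps_cond p mu1 mu2 <= ps_cond p (qmul mu1 chi) (qmul mu2 chi))%N.

(* Main.v *)
Require Import Defs.
From Stdlib Require Import ClassicalEpsilon Classical.
From mathcomp Require Import all_boot all_order all_algebra all_field.
From mathcomp Require Import cyclic zify.
Set Implicit Arguments. Unset Strict Implicit. Unset Printing Implicit Defensive.
Import Order.TTheory GRing.Theory Num.Theory.

Lemma E1 q s e : (1 + q * s) ^ e = 1 + e * s * q %[mod q ^ 2].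
Proof.
elim: e => [|e IH]; first by rewrite expn0 !mul0n addn0.
rewrite expnSr -modnMml IH modnMml.
have -> : (1 + e * s * q) * (1 + q * s) = 1 + e.+1 * s * q + (e * s * s) * q ^ 2.
  rewrite expnS expn1; nia.
by rewrite addnC modnMDl.
Qed.

Lemma one_plus_root x q : 1 < q -> x = 1 %[mod q] -> x = 1 + q * (x %/ q).
Proof.
move=> q1 H; rewrite {1}(divn_eq x q) H modn_small // mulnC addnC //.
Qed.

Local Open Scope ring_scope.
Lemma onex_bezout (R : comUnitRingType) (x : R) (k M : nat) :
  (0 < k)%N -> coprime k M -> x ^+ k = 1 -> x ^+ M = 1 -> x = 1.
Proof.
move=> k0 cop Hk HM; have [a _ Hd] := Bezoutl M k0.
rewrite (eqP cop) in Hd; case/dvdnP: Hd => b Hb.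
have : x ^+ (1 + a * M) = 1 by rewrite Hb mulnC exprM Hk expr1n.
by rewrite exprD expr1 mulnC exprM HM expr1n mulr1.
Qed.
Local Close Scope ring_scope.
Section Chi.
Variables (p : nat) (chi : nat -> algC) (n0 : nat).
Hypothesis pr : prime p.
Hypothesis Hper : forall a, chi (a + p ^ n0) = chi a.
Hypothesis Hz : forall a, (chi a == 0%R) = (p %| a).
Hypothesis Hm : forall a b, chi (a * b) = (chi a * chi b)%R.

Definition T k m := trivial_on p (fun a => chi a ^+ k)%R m.

Lemma p_gt1 : (1 < p)%N. Proof. exact: prime_gt1. Qed.

Lemma chi1 : chi 1 = 1%R.
Proof.
have h : chi 1 != 0%R by rewrite Hz dvdn1; apply/eqP=> e; move: pr; rewrite e.
apply: (mulIf h); by rewrite -Hm mul1r.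
Qed.

Lemma chiX a e : chi (a ^ e) = (chi a ^+ e)%R.
Proof. elim: e => [|e IH]; first by rewrite expn0 expr0 chi1.
by rewrite expnS Hm IH exprS. Qed.

Lemma chi_modP a b : a = b %[mod p ^ n0] -> chi a = chi b.
Proof.
have h : forall c q, chi (c + q * p ^ n0) = chi c.
  move=> c; elim=> [|q IH]; first by rewrite mul0n addn0.
  by rewrite mulSn addnCA addnC Hper.
move=> e; rewrite (divn_eq a (p ^ n0)) (divn_eq b (p ^ n0)) e.
by rewrite addnC h addnC h.
Qed.

Lemma cong_p k x : (0 < k)%N -> x = 1 %[mod p ^ k] -> x = 1 %[mod p].
Proof.
move=> k0 e; have d : (p %| p ^ k)%N by rewrite -{1}(expn1 p) dvdn_exp2l.
by rewrite -(modn_dvdm x d) e modn_dvdm.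
Qed.

Lemma cop_cong1 k x : (0 < k)%N -> x = 1 %[mod p ^ k] -> coprime x p.
Proof.
move=> k0 /(cong_p k0) e; rewrite coprime_sym prime_coprime //; apply/negP=> d.
move: e; rewrite (eqP d) (modn_small p_gt1) => e1; move: p_gt1; by rewrite e1.
Qed.

Lemma T_mono k m m' : T k m -> (m <= m')%N -> T k m'.
Proof.
move=> H le a ca e; apply: H => //.
have d : (p ^ m %| p ^ m')%N by rewrite dvdn_exp2l.
by rewrite -(modn_dvdm a d) e modn_dvdm.
Qed.

Lemma T1k k m : T 1 m -> T k m.
Proof. by move=> H a ca e; rewrite -(expr1 (chi a)) (H a ca e) expr1n. Qed.

Lemma chi_congN N x y : T 1 N -> coprime x p -> coprime y p ->
  x = y %[mod p ^ N] -> chi x = chi y.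
Proof.
move=> H cx cy e.
have cyN : coprime y (p ^ N) by rewrite coprimeXr.
have tg : (0 < totient (p ^ N))%N by rewrite totient_gt0 expn_gt0 prime_gt0.
have Eu := Euler_exp_totient cyN.
set z := y ^ (totient (p ^ N)).-1.
have yz : y * z = y ^ totient (p ^ N) by rewrite /z -expnS prednK.
have cz : coprime z p by rewrite coprimeXl.
have h1 : chi (x * z) = 1%R.
  rewrite -(expr1 (chi (x * z))); apply: H; first by rewrite coprimeMl cx cz.
  by rewrite -modnMml e modnMml yz Eu.
have h2 : chi (y * z) = 1%R.
  rewrite -(expr1 (chi (y * z))); apply: H; first by rewrite coprimeMl cy cz.
  by rewrite yz Eu.
have nz : chi z != 0%R by rewrite Hz; rewrite coprime_sym prime_coprime // in cz.
by apply: (mulIf nz); rewrite -!Hm h1 h2.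
Qed.

Lemma pow_p_cong j a : a = 1 %[mod p] -> a ^ (p ^ j) = 1 %[mod p ^ j.+1].
Proof.
move=> e; elim: j => [|j IH]; first by rewrite expn0 expn1 expn1.
have q1 : (1 < p ^ j.+1)%N by rewrite -(expn0 p) ltn_exp2l ?p_gt1.
rewrite expnSr expnM (one_plus_root q1 IH).
set s := _ %/ _.
have d : (p ^ j.+2 %| (p ^ j.+1) ^ 2)%N.
  rewrite -expnM dvdn_exp2l //; lia.
rewrite -(modn_dvdm _ d) E1 (modn_dvdm _ d).
rewrite -mulnA mulnC -mulnA -expnSr mulnC.
by rewrite mulnC addnC modnMDl.

Qed.
Lemma L_A k m : ~~ (p %| k)%N -> (0 < m)%N -> T k m -> T 1 m.
Proof.
move=> nd m0 H a ca e; rewrite expr1.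
have k0 : (0 < k)%N by case: k nd H => //; rewrite dvdn0.
apply: (@onex_bezout _ _ k (p ^ n0)) => //.
  by rewrite coprimeXr // coprime_sym prime_coprime.
  exact: (H a ca e).
rewrite -chiX -chi1; apply: chi_modP.
have d : (p ^ n0 %| p ^ n0.+1)%N by rewrite dvdn_exp2l.
by rewrite -(modn_dvdm _ d) pow_p_cong ?(modn_dvdm _ d) // (cong_p m0 e).
Qed.

Lemma L_up N : (2 <= N)%N -> T 1 N -> T p (N - 1).
Proof.
move=> N2 H a ca e.
have EN : N = (N - 1).+1 by lia.
have q1 : (1 < p ^ (N - 1))%N by rewrite -(expn0 p) ltn_exp2l ?p_gt1 //; lia.
rewrite -chiX -chi1; apply: (chi_congN H).
- exact: coprimeXl.
- by rewrite coprime_sym coprimen1.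
have d : (p ^ N %| (p ^ (N - 1)) ^ 2)%N by rewrite -expnM dvdn_exp2l //; lia.
move: (a %/ p ^ (N - 1)) (one_plus_root q1 e) => s ->.
rewrite -(modn_dvdm _ d) E1 (modn_dvdm _ d).
rewrite [p * s]mulnC -mulnA -expnS -EN.
by rewrite addnC modnMDl.
Qed.

Lemma L_down N : (3 <= N)%N ->
  (1 + p ^ (N - 2)) ^ p = 1 + p ^ (N - 1) %[mod p ^ N] ->
  T 1 N -> T p (N - 2) -> T 1 (N - 1).
Proof.
move=> N3 Hexp H Hp b cb e; rewrite expr1.
have q1 : (1 < p ^ (N - 1))%N by rewrite -(expn0 p) ltn_exp2l ?p_gt1 //; lia.
have cg : coprime (1 + p ^ (N - 1)) p.
  apply: (@cop_cong1 (N - 1)); first lia. by rewrite modnDr.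
have ca : coprime (1 + p ^ (N - 2)) p.
  apply: (@cop_cong1 (N - 2)); first lia. by rewrite modnDr.
have d : (p ^ N %| (p ^ (N - 1)) ^ 2)%N by rewrite -expnM dvdn_exp2l //; lia.
have -> : chi b = chi ((1 + p ^ (N - 1)) ^ (b %/ p ^ (N - 1))).
  apply: (chi_congN H) => //; first exact: coprimeXl.
  move: (b %/ _) (one_plus_root q1 e) => s ->.
  have h := E1 (p ^ (N - 1)) 1 s; rewrite !muln1 in h.
  rewrite -(modn_dvdm (1 + _ * s) d) -[in RHS](modn_dvdm _ d) h.
  by rewrite mulnC.
rewrite chiX -(chi_congN H _ cg Hexp); last exact: coprimeXl.
rewrite chiX -{1}(expr1 (chi (1 + _))) (Hp _ ca) ?expr1n //.
by rewrite modnDr.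
Qed.
End Chi.
Lemma minimal_exists (P : nat -> Prop) : (exists n, P n) ->
  exists n, P n /\ forall m, P m -> (n <= m)%N.
Proof.
case=> n; elim: n {-2}n (leqnn n) => [|b IH] n le Pn.
  by exists n; split=> // m _; move: le; rewrite leqn0 => /eqP ->.
case: (classic (exists m, (m < n)%N /\ P m)) => [[m [lt Pm]]|no].
  by apply: (IH m) => //; lia.
exists n; split=> // m Pm; case: (ltnP m n) => // lt; exfalso; apply: no; eauto.
Qed.

Definition cfP p (f : nat -> algC) n :=
  trivial_on p f n /\ forall m, trivial_on p f m -> (n <= m)%N.

Lemma tr_ext p (f g : nat -> algC) n : (forall a, coprime a p -> f a = g a) ->
  trivial_on p f n -> trivial_on p g n.
Proof. by move=> e H a ca ea; rewrite -e // H. Qed.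

Lemma cond_cf p mu f n : (forall a, coprime a p -> qres mu a = f a) ->
  cfP p f n -> cond_exp p mu = n.
Proof.
move=> e [Hn Hmin].
have ex : exists c, cfP p (qres mu) c.
  apply: minimal_exists; exists n; apply: tr_ext Hn => a ca; by rewrite e.
have [Hc Hcm] : cfP p (qres mu) (cond_exp p mu) by apply: epsilon_spec.
apply/eqP; rewrite eqn_leq; apply/andP; split.
  by apply: Hcm; apply: tr_ext Hn => a ca; rewrite e.
by apply: Hmin; apply: tr_ext Hc.
Qed.

Lemma cf_uniq p f m n : cfP p f m -> cfP p f n -> m = n.
Proof. move=> [H1 H2] [H3 H4]; apply/eqP; rewrite eqn_leq H2 // H4 //. Qed.

Lemma tr_mono p f m m' : trivial_on p f m -> (m <= m')%N -> trivial_on p f m'.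
Proof.
move=> H le a ca e; apply: H => //.
have d : (p ^ m %| p ^ m')%N by rewrite dvdn_exp2l.
by rewrite -(modn_dvdm a d) e modn_dvdm.
Qed.

Lemma cf_intro p f n : trivial_on p f n -> (n = 0%N \/ ~ trivial_on p f n.-1) ->
  cfP p f n.
Proof.
move=> H [e|nt]; first by subst n; split=> // m _.
split=> // m Hm; case: (ltnP m n) => // lt; exfalso; apply: nt.
apply: (tr_mono Hm); lia.
Qed.

Lemma tr0 p f : trivial_on p f 0 <-> forall a, coprime a p -> f a = 1%R.
Proof. by split=> H a ca; [apply: H => //; rewrite expn0 !modn1 | rewrite H]. Qed.

Definition resP p mu k := (0 < k)%N /\
       (forall a, coprime a p -> (qres mu a ^+ k)%R = 1%R) /\
       forall m, (0 < m)%N -> (forall a, coprime a p -> (qres mu a ^+ m)%R = 1%R) ->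
         (k <= m)%N.

Lemma res_spec p mu : (exists k, (0 < k)%N /\ forall a, coprime a p -> (qres mu a ^+ k)%R = 1%R) ->
  let d := res_order p mu in
  [/\ (0 < d)%N, (forall a, coprime a p -> (qres mu a ^+ d)%R = 1%R) &
      forall m, (0 < m)%N -> (forall a, coprime a p -> (qres mu a ^+ m)%R = 1%R) -> (d <= m)%N].
Proof.
move=> ex /=; have [H1 [H2 H3]] : resP p mu (res_order p mu).
  apply: epsilon_spec.
  have [k [[k0 Hk] Hmin]] := minimal_exists ex.
  exists k; split=> //; split=> // m m0 Hm; apply: Hmin; by split.
by split.
Qed.

Lemma hexp3 j : (1 + 3 ^ j.+1) ^ 3 = 1 + 3 ^ j.+2 %[mod 3 ^ j.+3].
Proof.
have e1 : 3 ^ j.+1 = 3 ^ j * 3 by rewrite expnSr.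
have e2 : 3 ^ j.+2 = 3 ^ j * 3 * 3 by rewrite !expnSr.
have e3 : 3 ^ j.+3 = 3 ^ j * 3 * 3 * 3 by rewrite !expnSr.
rewrite e1 e2 e3; set y := 3 ^ j.
have -> : (1 + y * 3) ^ 3 = 1 + y * 3 * 3 + (y + y * y) * (y * 3 * 3 * 3).
  rewrite !expnS expn0; nia.
by rewrite addnC modnMDl.
Qed.

Lemma hexp2 j : (1 + 2 ^ j.+2) ^ 2 = 1 + 2 ^ j.+3 %[mod 2 ^ j.+4].
Proof.
have e1 : 2 ^ j.+2 = 2 ^ j * 2 * 2 by rewrite !expnSr.
have e2 : 2 ^ j.+3 = 2 ^ j * 2 * 2 * 2 by rewrite !expnSr.
have e3 : 2 ^ j.+4 = 2 ^ j * 2 * 2 * 2 * 2 by rewrite !expnSr.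
rewrite e1 e2 e3; set y := 2 ^ j.
have -> : (1 + y * 2 * 2) ^ 2 = 1 + y * 2 * 2 * 2 + y * (y * 2 * 2 * 2 * 2).
  rewrite !expnS expn0; nia.
by rewrite addnC modnMDl.
Qed.
Lemma sq_odd8 a : odd a -> a ^ 2 = 1 %[mod 8].
Proof.
move=> oa; rewrite -modnXm.
have h8 := ltn_pmod a (isT : 0 < 8).
have ho : odd (a %% 8) by rewrite odd_mod.
move: (a %% 8) h8 ho; do 8?[case=> //].
Qed.

Lemma sq3 a : coprime a 3 -> a ^ 2 = 1 %[mod 3].
Proof.
move=> ca; have := Euler_exp_totient ca; by rewrite totient_prime.
Qed.

Theorem mainTheorem7 (p : nat) (mu1 mu2 : qpchar) :
  prime p ->
  valid_qpchar p mu1 -> valid_qpchar p mu2 ->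
  p_minimal p mu1 mu2 ->
  unramified p mu1 ->
  (1 <= ps_cond p mu1 mu2)%N ->
  let N := ps_cond p mu1 mu2 in
  let om := qmul mu1 mu2 in
  let a3 := wd_cond p (sym3 mu1 mu2) in
  [/\ (5 <= p)%N ->
        a3 = (if (1 < N)%N || ((N == 1)%N && (3 < res_order p om)%N)
              then 3 * N else 3 * N - 1)%N,
      p = 3%N ->
        a3 = (if (N == 2)%N && (res_order p om == 3)%N
              then 2 * N else 3 * N - 1)%N
    & p = 2%N ->
        a3 = (if (3 < N)%N then 3 * N - 1 else 2 * N)%N].
Proof.
move=> pr _ [[[n1 Hper] Hz Hm] _] _ Hun N1 N om a3.
move: Hper Hz Hm; set chi := qres mu2 => Hper Hz Hm.
move/tr0: Hun => m1.
have c1e := chi1 pr Hz Hm.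
have Tn0 : forall k, T p chi k n1.
  by move=> k a ca e; rewrite (chi_modP Hper e) c1e expr1n.
have cfex : forall k, exists c, cfP p (fun a => chi a ^+ k)%R c.
  by move=> k; apply: minimal_exists; exists n1; exact: Tn0.
have [c1 [H1 H1m]] := cfex 1%N.
have [c2 H2] := cfex 2%N.
have [c3 H3] := cfex 3%N.
have Cm1 : cond_exp p mu1 = 0%N.
  apply: (@cond_cf _ _ (fun=> 1%R)); first by move=> a ca; rewrite m1.
  apply: cf_intro; [by apply/tr0 | by left].
have Cm2 : cond_exp p mu2 = c1.
  apply: (@cond_cf _ _ (fun a => chi a ^+ 1)%R) => //; by move=> a _; rewrite expr1.
have EN : N = c1 by rewrite /N /ps_cond /wd_cond /= Cm1 Cm2 addn0.
have S1 : cond_exp p (qmul mu1 (qmul mu1 mu1)) = 0%N.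
  apply: (@cond_cf _ _ (fun=> 1%R)); first by move=> a ca /=; rewrite !m1 // !mul1r.
  apply: cf_intro; [by apply/tr0 | by left].
have S2 : cond_exp p (qmul (qmul mu1 mu1) mu2) = c1.
  apply: (@cond_cf _ _ (fun a => chi a ^+ 1)%R); last by split.
  by move=> a ca /=; rewrite !m1 // !mul1r expr1.
have S3 : cond_exp p (qmul mu1 (qmul mu2 mu2)) = c2.
  apply: (@cond_cf _ _ (fun a => chi a ^+ 2)%R) => //.
  by move=> a ca /=; rewrite !m1 // !mul1r expr2.
have S4 : cond_exp p (qmul mu2 (qmul mu2 mu2)) = c3.
  apply: (@cond_cf _ _ (fun a => chi a ^+ 3)%R) => //.
have Ea3 : a3 = (c1 + c2 + c3)%N.
  by rewrite /a3 /wd_cond /sym3 /= S1 S2 S3 S4; lia.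
have EX : exists k, (0 < k)%N /\ forall a, coprime a p -> (qres om a ^+ k)%R = 1%R.
  exists (totient (p ^ n1)); split; first by rewrite totient_gt0 expn_gt0 prime_gt0.
  move=> a ca /=; rewrite m1 // mul1r -(chiX pr Hz Hm) -c1e; apply: (chi_modP Hper).
  by apply: Euler_exp_totient; rewrite coprimeXr.
have := res_spec EX; move=> /= [d0 Td0 Dmin0].
have Td : T p chi (res_order p om) 0.
  apply/tr0 => a ca; have := Td0 a ca; by rewrite /= m1 // mul1r.
have Dmin : forall m, (0 < m)%N -> T p chi m 0 -> (res_order p om <= m)%N.
  move=> m m0 Tm; apply: Dmin0 => // a ca; rewrite /= m1 // mul1r.
  by move/tr0: Tm => h; apply: h.
set d := res_order p om in d0 Td Dmin *.
clear Td0 Dmin0 EX.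
rewrite Ea3 EN; have {}N1 : (1 <= c1)%N by rewrite -EN /N.
clear S1 S2 S3 S4 Cm1 Cm2 EN Ea3.
have nT10 : ~ T p chi 1 0 by move=> h; have := H1m 0%N h; lia.
have T23 : T p chi 2 0 -> T p chi 3 0 -> T p chi 1 0.
  move=> /tr0 h2 /tr0 h3; apply/tr0 => a ca; rewrite expr1.
  by rewrite -(h3 a ca) exprSr (h2 a ca) mul1r.
have cfA : forall k, (2 <= c1)%N -> ~~ (p %| k)%N -> cfP p (fun a => chi a ^+ k)%R c1.
  move=> k c12 nd; split; first exact: T1k.
  move=> m Tm; case: m Tm => [|m] Tm.
    have := H1m 1%N (L_A pr Hper Hz Hm nd (isT : 0 < 1)%N (tr_mono Tm (isT : 0 <= 1)%N)); lia.
  exact: H1m (L_A pr Hper Hz Hm nd (isT : 0 < m.+1)%N Tm).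
have cf0 : forall k, T p chi k 0 -> cfP p (fun a => chi a ^+ k)%R 0.
  by move=> k h; apply: cf_intro => //; left.
have cf1 : forall k, T p chi k 1 -> ~ T p chi k 0 -> cfP p (fun a => chi a ^+ k)%R 1.
  by move=> k h nh; apply: cf_intro => //; right.
split.
- move=> p5.
  have n2 : ~~ (p %| 2)%N by apply/negP => /dvdn_leq h; have := h isT; lia.
  have n3 : ~~ (p %| 3)%N by apply/negP => /dvdn_leq h; have := h isT; lia.
  case: (ltnP 1 c1) => hc.
    by rewrite (cf_uniq H2 (cfA 2%N hc n2)) (cf_uniq H3 (cfA 3%N hc n3)) /=; lia.
  have c11 : c1 = 1%N by lia.
  rewrite c11 in H1 *.
  case: (classic (T p chi 2 0)) => t2; case: (classic (T p chi 3 0)) => t3.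
  + by exfalso; apply: nT10; apply: T23.
  + rewrite (cf_uniq H2 (cf0 _ t2)) (cf_uniq H3 (cf1 _ (T1k _ H1) t3)).
    have := Dmin 2%N isT t2 => hd.
    have -> : (3 < d)%N = false by apply/negbTE; rewrite -leqNgt; lia.
    by [].
  + rewrite (cf_uniq H2 (cf1 _ (T1k _ H1) t2)) (cf_uniq H3 (cf0 _ t3)).
    have := Dmin 3%N isT t3 => hd.
    have -> : (3 < d)%N = false by apply/negbTE; rewrite -leqNgt; lia.
    by [].
  + rewrite (cf_uniq H2 (cf1 _ (T1k _ H1) t2)) (cf_uniq H3 (cf1 _ (T1k _ H1) t3)).
    have h3 : (3 < d)%N.
      have e1 : d <> 1%N by move=> e; apply: nT10; move: Td; rewrite e.
      have e2 : d <> 2%N by move=> e; apply: t2; move: Td; rewrite e.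
      have e3 : d <> 3%N by move=> e; apply: t3; move: Td; rewrite e.
      lia.
    by rewrite h3.
- move=> p3; subst p.
  case: (ltnP 2 c1) => hc.
  + have c2e : c2 = c1 := cf_uniq H2 (cfA 2%N (ltnW hc) isT).
    have Hexp : (1 + 3 ^ (c1 - 2)) ^ 3 = 1 + 3 ^ (c1 - 1) %[mod 3 ^ c1].
      have := hexp3 (c1 - 3).
      have -> : (c1 - 3).+3 = c1 by lia.
      have -> : (c1 - 3).+2 = (c1 - 1)%N by lia.
      by have -> : (c1 - 3).+1 = (c1 - 2)%N by lia.
    have nT : ~ T 3 chi 1 (c1 - 1) by move=> h; have := H1m _ h; lia.
    have c3e : c3 = (c1 - 1)%N.
      apply: (cf_uniq H3); apply: cf_intro.
        by apply: (@L_up _ _ pr Hz Hm c1) => //; apply: ltnW.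
      right; have -> : (c1 - 1).-1 = (c1 - 2)%N by lia.
      by move=> h; apply: nT; apply: (@L_down _ _ pr Hz Hm c1).
    rewrite c2e c3e.
    have -> : (c1 == 2)%N = false by apply/negbTE/eqP; lia.
    rewrite /=; lia.
  + case: (ltnP 1 c1) => hc1.
    * have c12 : c1 = 2%N by lia.
      subst c1.
      rewrite (cf_uniq H2 (cfA 2%N hc1 isT)).
      have t31 : T 3 chi 3 1 := @L_up _ _ pr Hz Hm 2%N isT H1.
      case: (classic (T 3 chi 3 0)) => t3.
      - rewrite (cf_uniq H3 (cf0 _ t3)).
        have := Dmin 3%N isT t3 => hd.
        have e1 : d <> 1%N by move=> e; apply: nT10; move: Td; rewrite e.
        have e2 : d <> 2%N.
          by move=> e; apply: nT10; apply: T23 => //; move: Td; rewrite e.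
        have -> : (d == 3)%N by apply/eqP; lia.
        by [].
      - rewrite (cf_uniq H3 (cf1 _ t31 t3)).
        have -> : (d == 3)%N = false by apply/negbTE/eqP => e; apply: t3; move: Td; rewrite e.
        by [].
    * have c11 : c1 = 1%N by lia.
      subst c1.
      have t2 : T 3 chi 2 0.
        apply/tr0 => a ca; rewrite -(chiX pr Hz Hm) -(expr1 (chi (a ^ 2))).
        apply: H1; first exact: coprimeXl.
        by rewrite expn1; apply: sq3.
      have t3 : ~ T 3 chi 3 0 by move=> h; apply: nT10; apply: T23.
      by rewrite (cf_uniq H2 (cf0 _ t2)) (cf_uniq H3 (cf1 _ (T1k _ H1) t3)).
- move=> p2; subst p.
  have c12 : (1 < c1)%N.
    case: (ltnP 1 c1) => // hc; exfalso; apply: nT10.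
    have c11 : c1 = 1%N by lia.
    subst c1; apply/tr0 => a ca; rewrite -(expr1 (chi a)); apply: H1 => //.
    by rewrite expn1 !modn2 -coprimen2 ca.
  have c3e : c3 = c1 := cf_uniq H3 (cfA 3%N c12 isT).
  rewrite c3e.
  case: (ltnP 3 c1) => hc.
  + have Hexp : (1 + 2 ^ (c1 - 2)) ^ 2 = 1 + 2 ^ (c1 - 1) %[mod 2 ^ c1].
      have := hexp2 (c1 - 4).
      have -> : (c1 - 4).+4 = c1 by lia.
      have -> : (c1 - 4).+3 = (c1 - 1)%N by lia.
      by have -> : (c1 - 4).+2 = (c1 - 2)%N by lia.
    have nT : ~ T 2 chi 1 (c1 - 1) by move=> h; have := H1m _ h; lia.
    have c2e : c2 = (c1 - 1)%N.
      apply: (cf_uniq H2); apply: cf_intro.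
        by apply: (@L_up _ _ pr Hz Hm c1) => //; apply: ltnW.
      right; have -> : (c1 - 1).-1 = (c1 - 2)%N by lia.
      move=> h; apply: nT; apply: (@L_down _ _ pr Hz Hm c1) => //; lia.
    rewrite c2e; lia.
  + have t2 : T 2 chi 2 0.
      apply/tr0 => a ca; rewrite -(chiX pr Hz Hm) -(expr1 (chi (a ^ 2))).
      apply: H1; first exact: coprimeXl.
      have dv : (2 ^ c1 %| 8)%N by rewrite (_ : 8 = 2 ^ 3)%N // dvdn_exp2l.
      by rewrite -(modn_dvdm (a ^ 2) dv) sq_odd8 ?(modn_dvdm _ dv) // -coprimen2.
    rewrite (cf_uniq H2 (cf0 _ t2)); lia.
Qed.
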